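(* Let $T=(L,R,\tau,\sigma)$ be a rewrite rule and $m:L\to G$ a matching with respect to $T$. Let $(\mathcal{H},\tau_1,\delta)$ be a pushout of $\tau:|L|\to|R|$ and $|m|:|L|\to|G|$ in the category of sets, with $\tau_1:|G|\to\mathcal{H}$, $\delta:|R|\to\mathcal{H}$, $\delta\circ\tau=\tau_1\circ|m|$. Let $\Gamma=|G|-|m(L)|$, $\Sigma=\mathrm{dom}(\sigma)$, $\Delta=|R|-\Sigma$. Then $\mathcal{H}$ is the disjoint union $\mathcal{H}=\tau_1(\Gamma)+\delta(\Delta)+\delta(\Sigma)$, where the restriction $\tau_1:\Gamma\to\tau_1(\Gamma)$ is bijective, the restriction $\delta:\Delta\to\delta(\Delta)$ is bijective, and for distinct nodes $n,n'\in\Sigma$ with $\delta(n)=\delta(n')$ one has $\sigma(n)=\sigma(n')$. In addition, there is a unique partial function $\sigma_1:\mathcal{H}\rightharpoonup|G|$ with domain $\delta(\Sigma)$ such that $|m|\circ\sigma=\sigma_1\circ\delta$ on $\Sigma$.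
   Context: A signature $\Omega$ assigns an arity to each symbol; for a function $f$, $f^*$ acts letterwise on strings. A termgraph (graph) $G$ has node set $|G|$, a subset of labeled nodes, a labeling $\mathcal{L}_G$ of labeled nodes by symbols of $\Omega$ and a successor function $\mathcal{S}_G$ giving each labeled node a string of nodes of length the arity of its label. A graph morphism $g:G\to H$ is a function $|G|\to|H|$ sending labeled nodes to labeled nodes with $\mathcal{L}_H(g(n))=\mathcal{L}_G(n)$ and $\mathcal{S}_H(g(n))=g^*(\mathcal{S}_G(n))$ for each labeled $n$; $|g|$ denotes its underlying function. For graphs $G,H$ and a function $\tau:|G|\to|H|$, a node $p\in|H|$ is a $\tau$-clone of $q\in|G|$ if $p$ is labeled iff $q$ is labeled, and then $\mathcal{L}_H(p)=\mathcal{L}_G(q)$ and $\mathcal{S}_H(p)=\tau^*(\mathcal{S}_G(q))$. A rewrite rule is a tuple $(L,R,\tau,\sigma)$ with $L,R$ graphs, $\tau:|L|\to|R|$ a function, and $\sigma:|R|\rightharpoonup|L|$ a partial function such that each $n\in\mathrm{dom}(\sigma)$ is unlabeled or is a $\tau$-clone of $\sigma(n)$. A matching with respect to $T=(L,R,\tau,\sigma)$ is a graph morphism $m:L\to G$ such that whenever $m(p)=m(p')$ for distinct nodes $p,p'$ of $L$, then $\tau(p),\tau(p')\in\mathrm{dom}(\sigma)$ and $\sigma(\tau(p))=\sigma(\tau(p'))$. *)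

(* Defs.v *)
From Stdlib Require Import List.
Import ListNotations.
Set Implicit Arguments.

Record signature := Signature { sym : Type; arity : sym -> nat }.

(* The successor list is only meaningful on labeled nodes (values on
   unlabeled nodes are ignored by every definition below). *)
Record graph (S : signature) := Graph {
  node : Type;
  lab : node -> option (sym S);
  succ : node -> list node;
  succ_arity : forall n s, lab n = Some s -> length (succ n) = arity S s
}.
Arguments node {S} g.
Arguments lab {S} g _.
Arguments succ {S} g _.

Definition is_morphism (S : signature) (G H : graph S) (g : node G -> node H) : Prop :=
  forall n s, lab G n = Some s ->
    lab H (g n) = Some s /\ succ H (g n) = map g (succ G n).

Definition is_clone (S : signature) (G H : graph S) (tau : node G -> node H)
  (p : node H) (q : node G) : Prop :=
  (lab H p = None <-> lab G q = None) /\
  (forall s, lab G q = Some s ->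
     lab H p = Some s /\ succ H p = map tau (succ G q)).

Record rule (S : signature) := Rule {
  rL : graph S;
  rR : graph S;
  rtau : node rL -> node rR;
  rsigma : node rR -> option (node rL);
  rule_ax : forall n q, rsigma n = Some q ->
    lab rR n = None \/ is_clone rL rR rtau n q
}.

Definition is_matching (S : signature) (T : rule S) (G : graph S)
  (m : node (rL T) -> node G) : Prop :=
  is_morphism (rL T) G m /\
  forall p p', p <> p' -> m p = m p' ->
    exists q, rsigma T (rtau T p) = Some q /\ rsigma T (rtau T p') = Some q.

Definition is_pushout (A B C P : Type) (f : A -> B) (g : A -> C)
  (i1 : C -> P) (i2 : B -> P) : Prop :=
  (forall a, i2 (f a) = i1 (g a)) /\
  (forall (X : Type) (u : C -> X) (v : B -> X),
     (forall a, v (f a) = u (g a)) ->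
     exists h : P -> X,
       (forall c, h (i1 c) = u c) /\ (forall b, h (i2 b) = v b) /\
       (forall h' : P -> X, (forall c, h' (i1 c) = u c) ->
          (forall b, h' (i2 b) = v b) -> forall x, h' x = h x)).

(* Main.v *)
Require Import Defs.
From Stdlib Require Import List.

From Stdlib Require Import Classical ClassicalEpsilon PropExtensionality.

Lemma ext_fun (A B C X : Type) (f : A -> B) (g : A -> C) (v : B -> X) (d : C -> X)
  (Hc : forall a b, g a = g b -> v (f a) = v (f b)) :
  exists u : C -> X, (forall a, v (f a) = u (g a)) /\
    (forall c, ~ (exists a, g a = c) -> u c = d c).
Proof.
  exists (fun c => match excluded_middle_informative (exists a, g a = c) with
     | left e => v (f (proj1_sig (constructive_indefinite_description _ e)))
     | right _ => d c end).
  split.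
  - intro a. destruct (excluded_middle_informative (exists a0, g a0 = g a)) as [e|e].
    + destruct (constructive_indefinite_description _ e) as [b Hb]; simpl.
      apply Hc; auto.
    + exfalso; apply e; eauto.
  - intros c Hn. destruct (excluded_middle_informative (exists a, g a = c)); tauto.
Qed.

Lemma match_cons (S : signature) (T : rule S) (G : graph S)
  (m : node (rL T) -> node G) (Hm : is_matching T G m) (X : Type) (v : node (rR T) -> X)
  (Hv : forall n n' q, rsigma T n = Some q -> rsigma T n' = Some q -> v n = v n') :
  forall a b, m a = m b -> v (rtau T a) = v (rtau T b).
Proof.
  intros a b E. destruct (classic (a = b)) as [->|Nab]; [reflexivity|].
  destruct Hm as [_ Hm]. destruct (Hm a b Nab E) as [q [H1 H2]]. eauto.
Qed.

Theorem proposition1 (S : signature) (T : rule S) (G : graph S)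
  (m : node (rL T) -> node G) (Hm : is_matching T G m)
  (H : Type) (tau1 : node G -> H) (delta : node (rR T) -> H)
  (Hpo : is_pushout (rtau T) m tau1 delta) :
  let Gamma := fun x : node G => ~ exists p, m p = x in
  let Sigma := fun n : node (rR T) => rsigma T n <> None in
  let Delta := fun n : node (rR T) => rsigma T n = None in
  (* H is the disjoint union tau1(Gamma) + delta(Delta) + delta(Sigma) *)
  (forall h : H,
     (exists x, Gamma x /\ tau1 x = h) \/
     (exists n, Delta n /\ delta n = h) \/
     (exists n, Sigma n /\ delta n = h)) /\
  (forall x n, Gamma x -> Delta n -> tau1 x <> delta n) /\
  (forall x n, Gamma x -> Sigma n -> tau1 x <> delta n) /\
  (forall n n', Delta n -> Sigma n' -> delta n <> delta n') /\
  (* tau1 restricted to Gamma is injective (hence bijective onto its image) *)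
  (forall x x', Gamma x -> Gamma x' -> tau1 x = tau1 x' -> x = x') /\
  (* delta restricted to Delta is injective *)
  (forall n n', Delta n -> Delta n' -> delta n = delta n' -> n = n') /\
  (forall n n', Sigma n -> Sigma n' -> n <> n' -> delta n = delta n' ->
     rsigma T n = rsigma T n') /\
  (* unique partial sigma1 : H -> |G| with domain delta(Sigma), m o sigma = sigma1 o delta on Sigma *)
  (exists sigma1 : H -> option (node G),
     ((forall h, sigma1 h <> None <-> exists n, Sigma n /\ delta n = h) /\
      (forall n, Sigma n -> sigma1 (delta n) = option_map m (rsigma T n))) /\
     (forall sigma1' : H -> option (node G),
        (forall h, sigma1' h <> None <-> exists n, Sigma n /\ delta n = h) ->
        (forall n, Sigma n -> sigma1' (delta n) = option_map m (rsigma T n)) ->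
        forall h, sigma1' h = sigma1 h)).
Proof.
  intros Gamma Sigma Delta.
  destruct Hpo as [Hcomm Huniv].
  assert (Hsurj : forall h, (exists x, tau1 x = h) \/ (exists n, delta n = h)).
  { destruct (Huniv Prop (fun _ => True) (fun _ => True) (fun _ => eq_refl)) as [h0 [_ [_ Hu]]].
    intro h.
    assert (E1 := Hu (fun _ => True) (fun _ => eq_refl) (fun _ => eq_refl) h).
    assert (E2 := Hu (fun h => (exists x, tau1 x = h) \/ (exists n, delta n = h))).
    assert (E3 : ((exists x, tau1 x = h) \/ (exists n, delta n = h)) = h0 h).
    { apply E2.
      - intro c; apply propositional_extensionality; split; eauto.
      - intro c; apply propositional_extensionality; split; eauto. }
    rewrite E3, <- E1; exact I. }
  assert (Hsurj3 : forall h : H,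
     (exists x, Gamma x /\ tau1 x = h) \/
     (exists n, Delta n /\ delta n = h) \/
     (exists n, Sigma n /\ delta n = h)).
  { intro h. destruct (Hsurj h) as [[x <-]|[n <-]].
    - destruct (classic (Gamma x)) as [Gx|Gx]; [left; eauto|].
      unfold Gamma in Gx. apply NNPP in Gx. destruct Gx as [p <-].
      rewrite <- Hcomm. right.
      destruct (rsigma T (rtau T p)) eqn:E; [right|left]; exists (rtau T p); split; auto;
        unfold Sigma, Delta; rewrite E; congruence.
    - right. destruct (rsigma T n) eqn:E; [right|left]; exists n; split; auto;
        unfold Sigma, Delta; rewrite E; congruence. }
  set (v1 := fun n => match rsigma T n with None => inr (inl n) | Some q => inr (inr q) end
        : (node G + (node (rR T) + node (rL T)))%type).
  destruct (@ext_fun _ _ _ _ (rtau T) m v1 (fun x => inl x)) as [u1 [Hu1a Hu1b]].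
  { apply match_cons; auto. intros n n' q E E'. unfold v1; rewrite E, E'; auto. }
  destruct (Huniv _ u1 v1 Hu1a) as [c [Hc1 [Hc2 _]]].
  assert (CG : forall x, Gamma x -> c (tau1 x) = inl x).
  { intros x Gx; rewrite Hc1; apply Hu1b; auto. }
  assert (CD : forall n, Delta n -> c (delta n) = inr (inl n)).
  { intros n Dn; rewrite Hc2; unfold v1; unfold Delta in Dn; rewrite Dn; auto. }
  assert (CS : forall n, Sigma n -> exists q, rsigma T n = Some q /\ c (delta n) = inr (inr q)).
  { intros n Sn; rewrite Hc2; unfold v1; unfold Sigma in Sn.
    destruct (rsigma T n); [eauto|congruence]. }
  set (v2 := fun n => option_map m (rsigma T n)).
  destruct (@ext_fun _ _ _ _ (rtau T) m v2 (fun _ => None)) as [u2 [Hu2a Hu2b]].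
  { apply match_cons; auto. intros n n' q E E'. unfold v2; rewrite E, E'; auto. }
  destruct (Huniv _ u2 v2 Hu2a) as [s1 [Hs1 [Hs2 _]]].
  split; [exact Hsurj3|].
  split. { intros x n Gx Dn E. pose proof (CG x Gx). pose proof (CD n Dn). congruence. }
  split. { intros x n Gx Sn E. pose proof (CG x Gx). destruct (CS n Sn) as [q [_ Q]]. congruence. }
  split. { intros n n' Dn Sn E. pose proof (CD n Dn). destruct (CS n' Sn) as [q [_ Q]]. congruence. }
  split. { intros x x' Gx Gx' E. pose proof (CG x Gx). pose proof (CG x' Gx'). congruence. }
  split. { intros n n' Dn Dn' E. pose proof (CD n Dn). pose proof (CD n' Dn'). congruence. }
  split. { intros n n' Sn Sn' _ E. destruct (CS n Sn) as [q [Q1 Q2]].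
           destruct (CS n' Sn') as [q' [Q1' Q2']]. congruence. }
  assert (Dom : forall h, s1 h <> None <-> exists n, Sigma n /\ delta n = h).
  { intro h; split.
    - intro Hn. destruct (Hsurj3 h) as [[x [Gx <-]]|[[n [Dn <-]]|Hs]]; auto.
      + exfalso; apply Hn. rewrite Hs1; apply Hu2b; auto.
      + exfalso; apply Hn. rewrite Hs2; unfold v2; unfold Delta in Dn; rewrite Dn; auto.
    - intros [n [Sn <-]]. rewrite Hs2; unfold v2; unfold Sigma in Sn.
      destruct (rsigma T n); simpl; congruence. }
  exists s1. split; [split; [exact Dom|]|].
  { intros n _; rewrite Hs2; reflexivity. }
  intros s' Dom' Eq' h.
  destruct (classic (exists n, Sigma n /\ delta n = h)) as [[n [Sn <-]]|Nn].
  - rewrite Eq', Hs2; auto.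
  - destruct (s' h) eqn:E1; [exfalso; apply Nn, Dom'; congruence|].
    destruct (s1 h) eqn:E2; [exfalso; apply Nn, Dom; congruence|]. reflexivity.
Qed.
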